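(* Let $(\mathcal{Y}_i)_{i\in[K]}$ be any family of pairwise disjoint measurable subsets of $\mathcal{Y}$ with $P_Y(\mathcal{Y}_i)>0$ for every $i$, and put $\tilde{\mathcal{Y}}=\bigcup_{i=1}^K\mathcal{Y}_i$. Let $f^*_{\mathcal{X}}:\mathcal{X}\to\mathbb{R}^d$, $f^*_{\mathcal{Y}}:\mathcal{Y}\to\mathbb{R}^d$ and $\tau^*>0$ satisfy, for some constant $\Gamma\in\mathbb{R}$, $$g^*(x,y):=\frac{1}{\tau^*}f^*_{\mathcal{X}}(x)^\top f^*_{\mathcal{Y}}(y)=\ln\frac{p(x,y)}{p(x)p(y)}+\Gamma$$ for every $x\in\operatorname{supp}p_X$ and every $y\in\tilde{\mathcal{Y}}$. Let $\bar h^{g^*}(x)=\bar W^\top f^*_{\mathcal{X}}(x)+\bar b$ with $\bar W=[\bar w_1,\dots,\bar w_K]$, $\bar w_i=\mathbb{E}_{y\sim p_Y(\cdot\mid\mathcal{Y}_i)}[\tfrac{1}{\tau^*}f^*_{\mathcal{Y}}(y)]$ and $\bar b=(\ln P_Y(\mathcal{Y}_1),\dots,\ln P_Y(\mathcal{Y}_K))^\top$. Then $$\mathcal{L}_{\sup}(\bar h^{g^*})-\mathcal{L}_{\sup}(h^* )\le \mathbb{E}_{x\sim p_X}\Big[\mathrm{KL}\big(P_C(\cdot\mid x)\,\big\|\,P_C(\cdot\mid x;(\mathcal{Y}_i)_{i\in[K]})\big)\Big]+\mathbb{E}_{(x,c)\sim p(x,c)}\Big[\mathrm{KL}\big(p_Y(\cdot\mid\mathcal{Y}_c)\,\big\|\,p_Y(\cdot\mid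 x,\mathcal{Y}_c)\big)\Big].$$
   Context: $\mathcal{X},\mathcal{Y}$ are input spaces; $(X,Y)$ has joint density $p(x,y)=p_{X,Y}(x,y)$ with marginal densities $p(x)=p_X(x)$, $p(y)=p_Y(y)$ and conditional density $p(y\mid x)$. For $\mathcal{Y}'\subseteq\mathcal{Y}$, $P_Y(\mathcal{Y}')=\int_{\mathcal{Y}'}p(y)\,dy$ and $P_Y(\mathcal{Y}'\mid x)=\int_{\mathcal{Y}'}p(y\mid x)\,dy$. $[K]=\{1,\dots,K\}$. Labels: $C\in[K]$ with conditional probability $P_C(c\mid x)$, and $p(x,c)=P_C(c\mid x)p_X(x)$. For $h:\mathcal{X}\to\mathbb{R}^K$, $\mathcal{L}_{\sup}(h)=\mathbb{E}_{(x,c)\sim p(x,c)}\big[-\ln\frac{\exp h(x)_c}{\sum_{i=1}^K\exp h(x)_i}\big]$, and $h^*$ denotes a minimizer of $\mathcal{L}_{\sup}$ over all measurable $h$ (e.g. $h^*(x)_i=\ln P_C(i\mid x)$), so $\mathcal{L}_{\sup}(h^* )=\mathbb{E}_{p(x)}[H(P_C(\cdot\mid x))]$. Definitions: $p_Y(y\mid\mathcal{Y}_i)=p(y)/P_Y(\mathcal{Y}_i)$ if $y\in\mathcal{Y}_i$ and $0$ otherwise; $p_Y(y\mid x,\mathcal{Y}_i)=p(y\mid x)/P_Y(\mathcal{Y}_i\mid x)$ if $y\in\mathcal{Y}_i$ and $0$ otherwise; $P_C(c\mid x;(\mathcal{Y}_i)_{i\in[K]})=P_Y(\mathcal{Y}_c\mid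 x)/P_Y(\tilde{\mathcal{Y}}\mid x)$, a probability distribution on $[K]$. All expectations and KL divergences are assumed to be well defined and finite (in particular $P_Y(\mathcal{Y}_i\mid x)>0$ for $x\in\operatorname{supp}p_X$). *)

(* Defs.v *)
From HB Require Import structures.
From mathcomp Require Import all_boot all_order all_algebra.
From mathcomp Require Import all_classical all_reals all_analysis.
Set Implicit Arguments. Unset Strict Implicit. Unset Printing Implicit Defensive.
Import Order.TTheory GRing.Theory Num.Theory.
Local Open Scope classical_set_scope.
Local Open Scope ring_scope.

Section Defs.
Context {R : realType} {dX dY : measure_display}
  {TX : measurableType dX} {TY : measurableType dY}.
Variables (muX : {measure set TX -> \bar R}) (muY : {measure set TY -> \bar R}).
Variable (p : TX -> TY -> R). (* joint density p(x,y) w.r.t. muX (x) muY *)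

Definition margX (x : TX) : R := fine (\int[muY]_y (p x y)%:E).
Definition margY (y : TY) : R := fine (\int[muX]_x (p x y)%:E).
(* conditional density p(y|x) (meaningful for margX x > 0) *)
Definition condY (x : TX) (y : TY) : R := p x y / margX x.

Definition PY (A : set TY) : R := Rintegral muY A margY.
Definition PYx (x : TX) (A : set TY) : R := Rintegral muY A (condY x).

Definition pY_on (A : set TY) (y : TY) : R :=
  if `[< A y >] then margY y / PY A else 0.
Definition pYx_on (x : TX) (A : set TY) (y : TY) : R :=
  if `[< A y >] then condY x y / PYx x A else 0.

Definition KLdens (A : set TY) (q r : TY -> R) : \bar R :=
  \int[muY]_(y in A) (q y * ln (q y / r y))%:E.

Variable K : nat.
Variable Ys : 'I_K -> set TY.

Definition Ytilde : set TY := \bigcup_(i in [set: 'I_K]) Ys i.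

Definition PC_Y (x : TX) (c : 'I_K) : R := PYx x (Ys c) / PYx x Ytilde.

Definition KLfin (P Q : 'I_K -> R) : R := \sum_(c < K) P c * ln (P c / Q c).

Definition softmax (v : 'I_K -> R) (c : 'I_K) : R :=
  expR (v c) / \sum_(i < K) expR (v i).

Variable PC : TX -> 'I_K -> R.

(* L_sup(h) = E_{(x,c) ~ p(x,c)} [ - ln softmax(h(x))_c ],  p(x,c) = P_C(c|x) p_X(x) *)
Definition Lsup (h : TX -> 'I_K -> R) : \bar R :=
  \int[muX]_x (margX x * \sum_(c < K) PC x c * - ln (softmax (h x) c))%:E.

Definition EKL_label : \bar R :=
  \int[muX]_x (margX x * KLfin (PC x) (PC_Y x))%:E.

Definition KL_Y (x : TX) (c : 'I_K) : \bar R :=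
  KLdens (Ys c) (pY_on (Ys c)) (pYx_on x (Ys c)).
Definition EKL_Y : \bar R :=
  \int[muX]_x (\sum_(c < K) (margX x * PC x c)%:E * KL_Y x c)%E.

Variable d : nat.
Variables (fX : TX -> 'I_d -> R) (fY : TY -> 'I_d -> R) (tau : R).

Definition wbar (i : 'I_K) (j : 'I_d) : R :=
  Rintegral muY (Ys i) (fun y => pY_on (Ys i) y * (fY y j / tau)).

Definition hbar (x : TX) (i : 'I_K) : R :=
  \sum_(j < d) wbar i j * fX x j + ln (PY (Ys i)).

End Defs.

(* Main.v *)
Require Import Defs.
From HB Require Import structures.
From mathcomp Require Import all_boot all_order all_algebra.
From mathcomp Require Import all_classical all_reals all_analysis.
From mathcomp Require Import measurable_realfun ring lra.
Import Order.TTheory GRing.Theory Num.Theory.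
Local Open Scope classical_set_scope.
Local Open Scope ring_scope.

Section SF.
Context {R : realType} {d : measure_display} {T : measurableType d}.
Variable (mu : {measure set T -> \bar R}) (hmu : sigma_finite setT mu).
Definition sfw : set T -> \bar R := let _ := hmu in mu.
HB.instance Definition _ := Measure.on sfw.
HB.instance Definition _ := Measure_isSigmaFinite.Build _ _ _ sfw hmu.
End SF.

Lemma fubF_meas (R : realType) d1 d2 (T1 : measurableType d1) (T2 : measurableType d2)
  (m2 : {measure set T2 -> \bar R}) (h2 : sigma_finite setT m2)
  (f : T1 * T2 -> \bar R) : measurable_fun setT f -> (forall z, (0 <= f z)%E) ->
  measurable_fun setT (fun x => \int[m2]_y f (x, y))%E.
Proof.
move=> mf f0.
exact: (@measurable_fun_fubini_tonelli_F _ _ T1 T2 R (sfw m2 h2) f mf f0).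
Qed.

Lemma fubG_meas (R : realType) d1 d2 (T1 : measurableType d1) (T2 : measurableType d2)
  (m1 : {measure set T1 -> \bar R}) (h1 : sigma_finite setT m1)
  (f : T1 * T2 -> \bar R) : measurable_fun setT f -> (forall z, (0 <= f z)%E) ->
  measurable_fun setT (fun y => \int[m1]_x f (x, y))%E.
Proof.
move=> mf f0.
exact: (@measurable_fun_fubini_tonelli_G _ _ T1 T2 R (sfw m1 h1) f mf f0).
Qed.

Section Main.
Context (R : realType) (dX dY : measure_display)
  (TX : measurableType dX) (TY : measurableType dY)
  (muX : {measure set TX -> \bar R}) (muY : {measure set TY -> \bar R})
  (p : TX -> TY -> R).
Hypotheses (sfX : sigma_finite setT muX) (sfY : sigma_finite setT muY)
  (p0 : forall x y, 0 <= p x y)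
  (mp : measurable_fun setT (fun z : TX * TY => p z.1 z.2)).

Local Notation mX := (margX muY p).
Local Notation mY := (margY muX p).

Lemma mX_ge0 x : 0 <= mX x.
Proof. by rewrite /margX fine_ge0// integral_ge0// => y _; rewrite lee_fin. Qed.
Lemma mY_ge0 y : 0 <= mY y.
Proof. by rewrite /margY fine_ge0// integral_ge0// => x _; rewrite lee_fin. Qed.

Lemma mEp : measurable_fun setT (fun z : TX * TY => (p z.1 z.2)%:E).
Proof. exact/measurable_EFinP. Qed.

Lemma mX_meas : measurable_fun setT mX.
Proof.
apply: (measurableT_comp (fine_measurable measurableT)).
by apply: (@fubF_meas _ _ _ _ _ _ sfY _ mEp) => z /=; rewrite lee_fin.
Qed.

Lemma mY_meas : measurable_fun setT mY.
Proof.
apply: (measurableT_comp (fine_measurable measurableT)).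
by apply: (@fubG_meas _ _ _ _ _ _ sfX _ mEp) => z /=; rewrite lee_fin.
Qed.

Lemma px_meas x : measurable_fun setT (p x).
Proof. exact: (measurable_fun_pair2 x mp). Qed.

Lemma int_pos (A : set TY) (f : TY -> R) : measurable A -> measurable_fun A f ->
  (forall y, A y -> 0 <= f y) -> 0 < Rintegral muY A f ->
  muY.-integrable A (EFin \o f).
Proof.
move=> mA mf f0 pos; apply/integrableP; split; first exact/measurable_EFinP.
have -> : (\int[muY]_(x in A) `|(EFin \o f) x| = \int[muY]_(x in A) (f x)%:E)%E.
  by apply: eq_integral => y /[!inE] Ay /=; rewrite ger0_norm// f0.
move: pos; rewrite /Rintegral.
case: (\int[muY]_(x in A) _)%E => [r _|/=|/=]; last 2 first.
- by move=> h; exfalso; move: h; rewrite ltxx.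
- by move=> _; exact: ltNye.
- exact: ltry.
Qed.

Lemma intZr {A : set TY} (mA : measurable A) {f : TY -> R} (c : R) :
  muY.-integrable A (EFin \o f) ->
  muY.-integrable A (EFin \o (fun y => f y * c)).
Proof.
move=> h; apply: (eq_integrable mA _ _ _ (integrableZr mA c h)) => y _ /=.
by rewrite EFinM.
Qed.

Lemma intD {A : set TY} (mA : measurable A) {f g : TY -> R} :
  muY.-integrable A (EFin \o f) ->
  muY.-integrable A (EFin \o g) -> muY.-integrable A (EFin \o (fun y => f y + g y)).
Proof.
move=> hf hg; apply: (eq_integrable mA _ _ _ (integrableD mA hf hg)) => y _ /=.
by rewrite EFinD.
Qed.

Lemma intB {A : set TY} (mA : measurable A) {f g : TY -> R} :
  muY.-integrable A (EFin \o f) ->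
  muY.-integrable A (EFin \o g) -> muY.-integrable A (EFin \o (fun y => f y - g y)).
Proof.
move=> hf hg; apply: (eq_integrable mA _ _ _ (integrableB mA hf hg)) => y _ /=.
by rewrite EFinB.
Qed.

Lemma Rint_sum {A : set TY} (mA : measurable A) {I : Type} (s : seq I)
  (F : I -> TY -> R) : (forall j, muY.-integrable A (EFin \o F j)) ->
  muY.-integrable A (EFin \o (fun y => \sum_(j <- s) F j y)) /\
  Rintegral muY A (fun y => \sum_(j <- s) F j y) = \sum_(j <- s) Rintegral muY A (F j).
Proof.
move=> hF; elim: s => [|j s [ih1 ih2]].
  split.
    apply: (eq_integrable mA _ _ _ (integrable0 muY A)) => y _ /=.
    by rewrite big_nil.
  rewrite big_nil; under eq_Rintegral do rewrite big_nil.
  by rewrite Rintegral_cst// mul0r.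
split.
  apply: (eq_integrable mA _ _ _ (intD mA (hF j) ih1)) => y _ /=.
  by rewrite big_cons.
under eq_Rintegral do rewrite big_cons.
by rewrite RintegralD// ih2 big_cons.
Qed.

Lemma ln_le_sub1 (t : R) : 0 < t -> ln t <= t - 1.
Proof.
move=> t0; have := @le_ln1Dx R (t - 1); rewrite (addrC 1 (t - 1)) subrK; apply.
lra.
Qed.

Variables (K : nat) (Ys : 'I_K -> set TY) (PC : TX -> 'I_K -> R)
  (d : nat) (fX : TX -> 'I_d -> R) (fY : TY -> 'I_d -> R) (tau : R).
Hypotheses (mYs : forall i, measurable (Ys i))
  (PYpos : forall i, 0 < PY muX muY p (Ys i))
  (PYxpos : forall x, 0 < mX x -> forall i, 0 < PYx muY p x (Ys i))
  (tau0 : 0 < tau)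
  (ppos : forall x y, 0 < mX x -> Ytilde Ys y -> 0 < p x y /\ 0 < mY y)
  (Gam : R)
  (hG : forall x y, 0 < mX x -> Ytilde Ys y ->
     (\sum_(j < d) fX x j * fY y j) / tau
       = ln (p x y / (mX x * mY y)) + Gam)
  (hI : forall i j, muY.-integrable (Ys i)
     (fun y => (pY_on muX muY p (Ys i) y * (fY y j / tau))%:E)).

Hypotheses (disj : forall i j, i != j -> Ys i `&` Ys j = set0)
  (PC0 : forall x c, 0 <= PC x c) (PC1 : forall x, \sum_(c < K) PC x c = 1).

Hypothesis hKL : forall x c, 0 < mX x -> 0 < PC x c ->
     muY.-integrable (Ys c)
       (fun y => (pY_on muX muY p (Ys c) y
                  * ln (pY_on muX muY p (Ys c) y / pYx_on muY p x (Ys c) y))%:E).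

Lemma lnDiv (a b : R) : 0 < a -> 0 < b -> ln (a / b) = ln a - ln b.
Proof. by move=> ha hb; rewrite ln_div// posrE. Qed.
Lemma lnMul (a b : R) : 0 < a -> 0 < b -> ln (a * b) = ln a + ln b.
Proof. by move=> ha hb; rewrite lnM// posrE. Qed.

Lemma lnflip (a b : R) : 0 < a -> 0 < b -> - (a * ln (a / b)) = a * ln (b / a).
Proof. by move=> ha hb; rewrite !lnDiv //; ring. Qed.

Lemma cond_meas x : measurable_fun setT (condY muY p x).
Proof. by apply: measurable_funM; [exact: px_meas|exact: measurable_cst]. Qed.

Section fixx.
Variables (x : TX) (hx : 0 < mX x) (i : 'I_K).
Let A := Ys i.
Let mA : measurable A := mYs i.
Let PYA := PY muX muY p A.
Let PYxA := PYx muY p x A.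
Let q' y := mY y / PYA.
Let r' y := condY muY p x y / PYxA.

Let PYA0 : 0 < PYA. Proof. exact: PYpos. Qed.
Let PYxA0 : 0 < PYxA. Proof. exact: PYxpos. Qed.

Let int_cond : muY.-integrable A (EFin \o condY muY p x).
Proof.
apply: int_pos => //; first exact: measurable_funTS (cond_meas x).
by move=> y _; rewrite /condY divr_ge0// mX_ge0.
Qed.

Let int_mY : muY.-integrable A (EFin \o mY).
Proof.
apply: int_pos => //; first exact: measurable_funTS mY_meas.
by move=> y _; exact: mY_ge0.
Qed.

Let int_q : muY.-integrable A (EFin \o q'). Proof. exact: intZr. Qed.
Let int_r : muY.-integrable A (EFin \o r'). Proof. exact: intZr. Qed.

Let Rint_q : Rintegral muY A q' = 1.
Proof. by rewrite RintegralZr// divff// gt_eqF. Qed.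
Let Rint_r : Rintegral muY A r' = 1.
Proof. by rewrite RintegralZr// divff// gt_eqF. Qed.

Let Ay y : A y -> Ytilde Ys y.
Proof. by move=> Ay; exists i. Qed.

Let qpos y : A y -> 0 < q' y.
Proof. by move=> yA; have [_ h] := ppos _ _ hx (Ay y yA); exact: divr_gt0. Qed.
Let rpos y : A y -> 0 < r' y.
Proof. by move=> yA; have [h _] := ppos _ _ hx (Ay y yA); rewrite /r' /condY !divr_gt0. Qed.

Let qE y : A y -> pY_on muX muY p A y = q' y.
Proof. by move=> yA; rewrite /pY_on asboolT. Qed.
Let rE y : A y -> pYx_on muY p x A y = r' y.
Proof. by move=> yA; rewrite /pYx_on asboolT. Qed.

Let G y := (\sum_(j < d) fX x j * fY y j) / tau.
Let Kc := Gam + ln PYxA - ln PYA.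

Let hbar_int : (\sum_(j < d) wbar muX muY p Ys fY tau i j * fX x j)
   = Rintegral muY A (fun y => q' y * G y) /\
   muY.-integrable A (EFin \o (fun y => q' y * G y)).
Proof.
have hq j : muY.-integrable A (EFin \o (fun y => q' y * (fY y j / tau))).
  apply: (eq_integrable mA _ _ _ (hI i j)) => y /[!inE] yA /=.
  by rewrite qE.
have hF j : muY.-integrable A
    (EFin \o (fun y => q' y * (fY y j / tau) * fX x j)).
  exact: intZr.
have [hs he] := Rint_sum mA (index_enum 'I_d) _ hF.
have e j : wbar muX muY p Ys fY tau i j * fX x j
    = Rintegral muY A (fun y => q' y * (fY y j / tau) * fX x j).
  rewrite RintegralZr//; congr (_ * _); apply: eq_Rintegral => y /[!inE] yA.
  by rewrite qE.
have eG y : q' y * G y = \sum_(j < d) q' y * (fY y j / tau) * fX x j.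
  rewrite /G mulr_suml big_distrr /=; apply: eq_bigr => j _; ring.
under eq_bigr do rewrite e.
split.
  rewrite -he; apply: eq_Rintegral => y _; by rewrite eG.
by apply: (eq_integrable mA _ _ _ hs) => y _ /=; rewrite eG.
Qed.

Let pt y : A y -> q' y * G y = - (q' y * ln (q' y / r' y)) + q' y * Kc.
Proof.
move=> yA; have [pxy mYy] := ppos _ _ hx (Ay y yA).
rewrite /G hG //; last exact: Ay.
rewrite /q' /r' /condY /Kc.
rewrite !lnDiv ?lnMul ?mulr_gt0 ?divr_gt0 ?invr_gt0 //.
ring.
Qed.

Lemma B1 : hbar muX muY p Ys fX fY tau x i <= Gam + ln (PYx muY p x (Ys i)).
Proof.
have [e hint] := hbar_int.
rewrite /hbar e.
have ub y : A y -> q' y * G y <= r' y - q' y + q' y * Kc.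
  move=> yA; rewrite pt // lerD2r.
  have hq := qpos y yA; have hr := rpos y yA.
  have -> : - (q' y * ln (q' y / r' y)) = q' y * ln (r' y / q' y).
    exact: lnflip.
  apply: (@le_trans _ _ (q' y * (r' y / q' y - 1))).
    by apply: ler_wpM2l; [exact: ltW | apply: ln_le_sub1; exact: divr_gt0].
  by rewrite mulrBr mulr1 mulrCA divff ?gt_eqF// mulr1.
have hint2 : muY.-integrable A (EFin \o (fun y => r' y - q' y + q' y * Kc)).
  by apply: intD => //; [exact: intB|exact: intZr].
have := le_Rintegral mA hint hint2 ub.
rewrite RintegralD//; last exact: intZr; last exact: intB.
rewrite RintegralB// RintegralZr// Rint_q Rint_r subrr add0r mul1r.
rewrite /Kc => h; rewrite -/PYA; lra.
Qed.

Lemma E1 : 0 < PC x i ->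
  KL_Y muX muY p Ys x i = (Gam + ln (PYx muY p x (Ys i)) - hbar muX muY p Ys fX fY tau x i)%:E.
Proof.
move=> hpc.
pose k y := q' y * ln (q' y / r' y).
have hk : muY.-integrable A (EFin \o k).
  apply: (eq_integrable mA _ _ _ (hKL _ _ hx hpc)) => y /[!inE] yA /=.
  by rewrite qE // rE.
have -> : KL_Y muX muY p Ys x i = (Rintegral muY A k)%:E.
  rewrite /Rintegral fineK; last exact: integrable_fin_num.
  rewrite /KL_Y /KLdens; apply: eq_integral => y /[!inE] yA.
  by rewrite qE // rE.
have [e hint] := hbar_int.
rewrite /hbar e.
have -> : Rintegral muY A (fun y => q' y * G y) = Rintegral muY A (fun y => q' y * Kc - k y).
  by apply: eq_Rintegral => y /[!inE] yA; rewrite pt // /k; ring.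
rewrite RintegralB//; last exact: intZr.
rewrite RintegralZr// Rint_q mul1r /Kc -/PYA -/PYxA.
congr EFin; ring.
Qed.

End fixx.

Lemma int_condL {x} (hx : 0 < mX x) i : muY.-integrable (Ys i) (EFin \o condY muY p x).
Proof.
apply: int_pos => //; first exact: measurable_funTS (cond_meas x).
  by move=> y _; rewrite /condY divr_ge0// mX_ge0.
exact: PYxpos.
Qed.

Lemma PYx_sum x (hx : 0 < mX x) :
  PYx muY p x (Ytilde Ys) = \sum_(i < K) PYx muY p x (Ys i).
Proof.
have eU : Ytilde Ys = \big[setU/set0]_(i <- index_enum 'I_K) Ys i.
  rewrite -bigcup_seq /Ytilde; congr (\bigcup_(i in _) _).
  by apply/seteqP; split => i //= _; rewrite mem_index_enum.
rewrite /PYx /Rintegral eU integral_bigsetU_EFin //.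
- rewrite (eq_bigr (fun i => (PYx muY p x (Ys i))%:E)); first by rewrite sumEFin.
  move=> i _; rewrite /PYx /Rintegral fineK //.
  exact: (integrable_fin_num (mYs i) (int_condL hx i)).
- exact: index_enum_uniq.
- by apply/trivIsetP => i j _ _ ij; exact: disj.
- apply: measurable_funTS; apply/measurable_EFinP; exact: cond_meas.
Qed.

Lemma Z_gt0 (v : 'I_K -> R) (c : 'I_K) : 0 < \sum_(i < K) expR (v i).
Proof.
rewrite (bigD1 c) //=; apply: (lt_le_trans (expR_gt0 (v c))); rewrite lerDl.
by apply: sumr_ge0 => i _; exact/ltW/expR_gt0.
Qed.

Lemma softmax_gt0 (v : 'I_K -> R) c : 0 < softmax v c.
Proof. by rewrite /softmax divr_gt0 ?expR_gt0 // (Z_gt0 v c). Qed.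

Lemma softmax_ge0 (v : 'I_K -> R) c : 0 <= softmax v c.
Proof. exact/ltW/softmax_gt0. Qed.

Lemma softmax_sum (v : 'I_K -> R) : \sum_(c < K) softmax v c <= 1.
Proof.
rewrite /softmax -mulr_suml.
have [->|Zn0] := eqVneq (\sum_(i < K) expR (v i)) 0; first by rewrite mul0r ler01.
by rewrite divff.
Qed.

Lemma lnsoftmax (v : 'I_K -> R) c : ln (softmax v c) = v c - ln (\sum_(i < K) expR (v i)).
Proof. by rewrite /softmax lnDiv ?expR_gt0 ?(Z_gt0 v c) // expRK. Qed.

Lemma gibbs x (v : 'I_K -> R) :
  \sum_(c < K) PC x c * - ln (PC x c) <= \sum_(c < K) PC x c * - ln (softmax v c).
Proof.
have h c : PC x c * - ln (PC x c) <=
    PC x c * - ln (softmax v c) + (softmax v c - PC x c).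
  have := PC0 x c; rewrite le_eqVlt => /orP[/eqP e|pos].
    rewrite -e !mul0r add0r subr0; exact: softmax_ge0.
  have tp := softmax_gt0 v c.
  have : PC x c * ln (softmax v c / PC x c) <= softmax v c - PC x c.
    apply: (@le_trans _ _ (PC x c * (softmax v c / PC x c - 1))).
      by apply: ler_wpM2l; [exact: ltW | apply: ln_le_sub1; exact: divr_gt0].
    by rewrite mulrBr mulr1 mulrCA divff ?gt_eqF// mulr1.
  rewrite lnDiv // mulrBr !mulrN => H; lra.
apply: (le_trans (ler_sum _ (fun c _ => h c))).
rewrite big_split /= sumrB PC1.
have := softmax_sum v; lra.
Qed.

Local Notation hb := (hbar muX muY p Ys fX fY tau).

Lemma key x (hx : 0 < mX x) c (hpc : 0 < PC x c) :
  ln (PC_Y muY p Ys x c) - ln (softmax (hb x) c)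
    <= Gam + ln (PYx muY p x (Ys c)) - hb x c.
Proof.
have Pi i : 0 < PYx muY p x (Ys i) := PYxpos _ hx i.
have Pt : 0 < PYx muY p x (Ytilde Ys).
  rewrite PYx_sum //; apply: (lt_le_trans (Pi c)); rewrite (bigD1 c) //= lerDl.
  by apply: sumr_ge0 => i _; exact/ltW.
rewrite /PC_Y lnDiv // lnsoftmax.
have Zb : \sum_(i < K) expR (hb x i) <= expR Gam * PYx muY p x (Ytilde Ys).
  rewrite PYx_sum // mulr_sumr; apply: ler_sum => i _.
  apply: (@le_trans _ _ (expR (Gam + ln (PYx muY p x (Ys i))))).
    by rewrite ler_expR; exact: B1.
  by rewrite expRD lnK // posrE.
have lZ : ln (\sum_(i < K) expR (hb x i)) <= Gam + ln (PYx muY p x (Ytilde Ys)).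
  apply: (@le_trans _ _ (ln (expR Gam * PYx muY p x (Ytilde Ys)))).
    by rewrite ler_ln ?posrE ?mulr_gt0 ?expR_gt0 // (Z_gt0 (hb x) c).
  by rewrite lnMul ?expR_gt0 // expRK.
lra.
Qed.

Lemma alg1 (P u w R' l : R) : 0 <= P -> u - w <= R' ->
  P * - w <= P * (l - u) + P * R' + P * - l.
Proof.
move=> hP H; rewrite -subr_ge0.
have -> : P * (l - u) + P * R' + P * - l - P * - w = P * (R' - (u - w)) by ring.
by apply: mulr_ge0 => //; rewrite subr_ge0.
Qed.

Lemma pw x (hx : 0 < mX x) :
  \sum_(c < K) PC x c * - ln (softmax (hb x) c) <=
  KLfin (PC x) (PC_Y muY p Ys x) + \sum_(c < K) PC x c * fine (KL_Y muX muY p Ys x c)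
  + \sum_(c < K) PC x c * - ln (PC x c).
Proof.
rewrite /KLfin -!big_split /=; apply: ler_sum => c _.
have := PC0 x c; rewrite le_eqVlt => /orP[/eqP e|pos].
  by rewrite -e !mul0r !addr0.
have Pt : 0 < PC_Y muY p Ys x c.
  apply: divr_gt0; first exact: PYxpos.
  rewrite PYx_sum //; apply: (lt_le_trans (PYxpos _ hx c)); rewrite (bigD1 c) //= lerDl.
  by apply: sumr_ge0 => i _; exact/ltW/PYxpos.
rewrite (E1 x hx c pos) /= lnDiv //.
apply: alg1; first exact: ltW.
exact: key.
Qed.

Lemma pwE (hs : TX -> 'I_K -> R) x :
  ((mX x * \sum_(c < K) PC x c * - ln (softmax (hb x) c))%:E <=
  (mX x * KLfin (PC x) (PC_Y muY p Ys x))%:E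
   + (\sum_(c < K) (mX x * PC x c)%:E * KL_Y muX muY p Ys x c)
   + (mX x * \sum_(c < K) PC x c * - ln (softmax (hs x) c))%:E)%E.
Proof.
have := mX_ge0 x; rewrite le_eqVlt => /orP[/eqP e|hx].
  rewrite -e !mul0r big1 ?adde0 //= => c _.
  by rewrite mul0r mul0e.
have eB : (\sum_(c < K) (mX x * PC x c)%:E * KL_Y muX muY p Ys x c)%E
    = (\sum_(c < K) mX x * PC x c * fine (KL_Y muX muY p Ys x c))%:E.
  rewrite -sumEFin; apply: eq_bigr => c _.
  have := PC0 x c; rewrite le_eqVlt => /orP[/eqP e|pos].
    by rewrite -e mulr0 mul0e mul0r.
  by rewrite (E1 x hx c pos) /= EFinM.
have e2 : \sum_(c < K) mX x * PC x c * fine (KL_Y muX muY p Ys x c)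
    = mX x * \sum_(c < K) PC x c * fine (KL_Y muX muY p Ys x c).
  by rewrite mulr_sumr; apply: eq_bigr => c _; rewrite mulrA.
rewrite eB e2 -!EFinD lee_fin -!mulrDr; apply: ler_wpM2l; first exact: ltW.
have := pw x hx; have := gibbs x (hs x); lra.
Qed.

Lemma softmax_le1 (v : 'I_K -> R) c : softmax v c <= 1.
Proof.
apply: le_trans (softmax_sum v); rewrite (bigD1 c) //= lerDl.
by apply: sumr_ge0 => i _; exact: softmax_ge0.
Qed.

Lemma S_ge0 (h : TX -> 'I_K -> R) x :
  0 <= mX x * \sum_(c < K) PC x c * - ln (softmax (h x) c).
Proof.
apply: mulr_ge0; first exact: mX_ge0.
apply: sumr_ge0 => c _; apply: mulr_ge0 => //.
by rewrite oppr_ge0; apply: ln_le0; exact: softmax_le1.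
Qed.

Hypotheses (mPC : forall c, measurable_fun setT (fun x => PC x c))
  (mfX : forall j, measurable_fun setT (fun x => fX x j)).

Lemma S_meas (h : TX -> 'I_K -> R) : (forall c, measurable_fun setT (fun x => h x c)) ->
  measurable_fun setT (fun x => (mX x * \sum_(c < K) PC x c * - ln (softmax (h x) c))%:E).
Proof.
move=> hm; apply/measurable_EFinP; apply: measurable_funM; first exact: mX_meas.
apply: measurable_sum => c.
have m1 : measurable_fun setT (fun x => - ln (softmax (h x) c)).
  have -> : (fun x => - ln (softmax (h x) c))
      = (fun x => ln (\sum_(i < K) expR (h x i)) - h x c).
    by apply/funext => x; rewrite lnsoftmax opprB.
  apply: measurable_funB => //.
  apply: measurableT_comp; first exact: measurable_ln.
  apply: measurable_sum => i.
  by apply: measurableT_comp; [exact: measurable_expR|exact: hm].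
exact: measurable_funM (mPC c) m1.
Qed.

Lemma hb_meas c : measurable_fun setT (fun x => hb x c).
Proof.
apply: measurable_funD; last exact: measurable_cst.
apply: measurable_sum => j.
by apply: measurable_funM; [exact: measurable_cst|exact: mfX].
Qed.

Lemma int_of_fin (f : TX -> \bar R) : measurable_fun setT f -> (forall x, (0 <= f x)%E) ->
  (\int[muX]_x f x)%E \is a fin_num -> muX.-integrable setT f.
Proof.
move=> mf f0 fin; apply/integrableP; split; first exact: mf.
have e : (\int[muX]_x `|f x| = \int[muX]_x f x)%E.
  apply: eq_integral => x _; exact: gee0_abs.
rewrite e.
rewrite -ge0_fin_numE; first exact: fin.
apply: integral_ge0 => x _; exact: f0.
Qed.

Variable hs : TX -> 'I_K -> R.
Hypotheses (mhs : forall c, measurable_fun setT (fun x => hs x c))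
  (fin_hs : Lsup muX muY p PC hs \is a fin_num)
  (fin_hb : Lsup muX muY p PC hb \is a fin_num)
  (int_a : muX.-integrable setT
    (fun x => (mX x * KLfin (PC x) (PC_Y muY p Ys x))%:E))
  (int_B : muX.-integrable setT
    (fun x => (\sum_(c < K) (mX x * PC x c)%:E * KL_Y muX muY p Ys x c)%E)).



Lemma final : (Lsup muX muY p PC hb - Lsup muX muY p PC hs
     <= EKL_label muX muY p Ys PC + EKL_Y muX muY p Ys PC)%E.
Proof.
have iL : muX.-integrable setT
    (fun x => (mX x * \sum_(c < K) PC x c * - ln (softmax (hb x) c))%:E).
  apply: (int_of_fin _ (S_meas _ hb_meas)).
    by move=> x; rewrite lee_fin S_ge0.
  exact: fin_hb.
have iH : muX.-integrable setT
    (fun x => (mX x * \sum_(c < K) PC x c * - ln (softmax (hs x) c))%:E).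
  apply: (int_of_fin _ (S_meas _ mhs)).
    by move=> x; rewrite lee_fin S_ge0.
  exact: fin_hs.
have iS := integrableD measurableT (integrableD measurableT int_a int_B) iH.
have le1 : (\int[muX]_x (mX x * \sum_(c < K) PC x c * - ln (softmax (hb x) c))%:E
  <= \int[muX]_x ((mX x * KLfin (PC x) (PC_Y muY p Ys x))%:E
   + (\sum_(c < K) (mX x * PC x c)%:E * KL_Y muX muY p Ys x c)
   + (mX x * \sum_(c < K) PC x c * - ln (softmax (hs x) c))%:E))%E.
  apply: (le_integral measurableT iL iS).
  by move=> x _; exact: pwE.
rewrite (integralD measurableT (integrableD measurableT int_a int_B) iH) in le1.
rewrite (integralD measurableT int_a int_B) in le1.
rewrite /Lsup /EKL_label /EKL_Y.
rewrite leeBlDr; [exact: le1 | exact: fin_hs].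
Qed.


End Main.

Theorem theorem1 (R : realType) (dX dY : measure_display)
  (TX : measurableType dX) (TY : measurableType dY)
  (muX : {measure set TX -> \bar R}) (muY : {measure set TY -> \bar R})
  (p : TX -> TY -> R)
  (K : nat) (Ys : 'I_K -> set TY) (PC : TX -> 'I_K -> R)
  (d : nat) (fX : TX -> 'I_d -> R) (fY : TY -> 'I_d -> R) (tau : R)
  (hstar : TX -> 'I_K -> R) :
  (* reference measures *)
  sigma_finite setT muX -> sigma_finite setT muY ->
  (* p is a joint probability density *)
  (forall x y, 0 <= p x y) ->
  measurable_fun setT (fun z : TX * TY => p z.1 z.2) ->
  (\int[muX]_x \int[muY]_y (p x y)%:E = 1)%E ->
  (* labels: P_C(. | x) is a conditional distribution on [K] *)
  (forall x c, 0 <= PC x c) ->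
  (forall x, \sum_(c < K) PC x c = 1) ->
  (forall c, measurable_fun setT (fun x => PC x c)) ->
  (* pairwise disjoint measurable subsets with positive probability *)
  (forall i, measurable (Ys i)) ->
  (forall i j, i != j -> Ys i `&` Ys j = set0) ->
  (forall i, 0 < PY muX muY p (Ys i)) ->
  (forall x, 0 < margX muY p x -> forall i, 0 < PYx muY p x (Ys i)) ->
  (* the representation g* *)
  (forall j, measurable_fun setT (fun x => fX x j)) ->
  (forall j, measurable_fun setT (fun y => fY y j)) ->
  0 < tau ->
  (forall x y, 0 < margX muY p x -> Ytilde Ys y ->
     0 < p x y /\ 0 < margY muX p y) ->
  (exists Gamma : R, forall x y, 0 < margX muY p x -> Ytilde Ys y ->
     (\sum_(j < d) fX x j * fY y j) / tau
       = ln (p x y / (margX muY p x * margY muX p y)) + Gamma) ->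
  (* h* minimizes L_sup over all measurable h *)
  (forall c, measurable_fun setT (fun x => hstar x c)) ->
  (forall h : TX -> 'I_K -> R, (forall c, measurable_fun setT (fun x => h x c)) ->
     (Lsup muX muY p PC hstar <= Lsup muX muY p PC h)%E) ->
  (* all expectations and KL divergences are well defined and finite *)
  (forall i j, muY.-integrable (Ys i)
     (fun y => (pY_on muX muY p (Ys i) y * (fY y j / tau))%:E)) ->
  Lsup muX muY p PC hstar \is a fin_num ->
  Lsup muX muY p PC (hbar muX muY p Ys fX fY tau) \is a fin_num ->
  muX.-integrable setT
    (fun x => (margX muY p x * KLfin (PC x) (PC_Y muY p Ys x))%:E) ->
  (forall x c, 0 < margX muY p x -> 0 < PC x c ->
     muY.-integrable (Ys c)
       (fun y => (pY_on muX muY p (Ys c) y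
                  * ln (pY_on muX muY p (Ys c) y / pYx_on muY p x (Ys c) y))%:E)) ->
  muX.-integrable setT
    (fun x => (\sum_(c < K) (margX muY p x * PC x c)%:E * KL_Y muX muY p Ys x c)%E) ->
  (Lsup muX muY p PC (hbar muX muY p Ys fX fY tau) - Lsup muX muY p PC hstar
     <= EKL_label muX muY p Ys PC + EKL_Y muX muY p Ys PC)%E.
Proof.
intros sfX sfY p0 mp _ PC0 PC1 mPC mYs disj PYpos PYxpos mfX mfY tau0 ppos [Gam hG]
  mhs _ hI fin_hs fin_hb int_a hKL int_B.
exact: (@final _ _ _ _ _ _ _ _ sfX sfY p0 mp _ _ _ _ _ _ _ mYs PYpos PYxpos ppos _ hG hI disj PC0 PC1 hKL mPC mfX _ mhs fin_hs fin_hb int_a int_B).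
Qed.
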